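(* For every $G^*\in\mathcal{G}^*_{d,c}(n)$, \[ \lvert S_n G^* \cap \phi^{-1}(L) \rvert \geq \frac{2}{dn}\, \lvert S_n G^* \rvert, \] where $L=\{x\in\{0,1\}^{nd/2}: \lvert x\rvert\ge T_c-1\}$ and $T_c=c\cdot\frac{dn}{2}\cdot\frac{d-1}{d+1}$.
   Context: Fix $0<c<1$, $n,d$ with $dn$ even, and $T_{\max}=\binom d2\frac n3$. $\mathcal{G}^*_{d,c}(n)$ is the set of $d$-regular graphs on nodes $\{1,\dots,n\}$ with at least $c\cdot T_{\max}$ triangles, where at each node the $d$ incident edges carry distinct labels $1,\dots,d$. Configuration ordering: for edges $e=(i_1j_1)$, $f=(i_2j_2)$ with $i_1<j_1$, $i_2<j_2$, $e\prec f$ if $i_1<i_2$, or $i_1=i_2$ and the label of $e$ at $i_1$ is smaller than that of $f$. With $e_1\prec\dots\prec e_{nd/2}$ the edges and $G^*[k]$ the subgraph on $e_1,\dots,e_k$, $\phi(G^* )\in\{0,1\}^{nd/2}$ has $\phi(G^* )(k)=1$ iff $e_k$ lies in a triangle of $G^*[k]$. For $x\in\{0,1\}^{nd/2}$, $\lvert x\rvert=\sum_j x(j)$. The symmetric group $S_n$ acts on $\mathcal{G}^*_{d,c}(n)$ by permuting node labels (keeping edge labels): $G^*_\sigma$ is the result of applying $\sigma$, and $S_nG^*=\{G^*_\sigma:\sigma\in S_n\}$ is the orbit. *)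

(* Defs.v *)
From HB Require Import structures.
From mathcomp Require Import all_boot all_order all_algebra fingroup perm.
Set Implicit Arguments. Unset Strict Implicit. Unset Printing Implicit Defensive.
Import Order.TTheory GRing.Theory Num.Theory.

(* Nodes are 'I_n (node i stands for i+1), edge labels are 'I_d (label k
   stands for k+1).  A labelled graph G* is encoded by its half-edge pairing:
   G (i,k) = (j,l) means that the edge incident to node i with label k at i
   goes to node j, where it carries label l. *)
Definition config (n d : nat) := {ffun 'I_n * 'I_d -> 'I_n * 'I_d}.

Section Defs.
Variables n d : nat.
Implicit Types G : config n d.

(* G encodes a d-regular simple graph with distinct labels 1..d at each node *)
Definition valid_config G : bool :=
  [forall h, (G (G h) == h) && ((G h).1 != h.1)] &&
  [forall h, forall h', ((h.1 == h'.1) && ((G h).1 == (G h').1)) ==> (h == h')].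

Definition adj G (a b : 'I_n) : bool := [exists k, (G (a, k)).1 == b].

Definition is_triangle G (t : {set 'I_n}) : bool :=
  (#|t| == 3) && [forall a in t, forall b in t, (a != b) ==> adj G a b].

Definition num_triangles G : nat := #|[set t | is_triangle G t]|.

(* An edge {i,j} with i<j is represented by the half-edge (i, label at i). *)
Definition edge_rep G (h : 'I_n * 'I_d) : bool := h.1 < (G h).1.

Definition hlt (h h' : 'I_n * 'I_d) : bool :=
  (h.1 < h'.1) || ((h.1 == h'.1) && (h.2 < h'.2)).
Definition hle (h h' : 'I_n * 'I_d) : bool := (h == h') || hlt h h'.

Definition edges G : seq ('I_n * 'I_d) :=
  sort hle [seq h <- enum [set: 'I_n * 'I_d] | edge_rep G h].

(* the edge {a,b} is an edge of G[k], where e_k = h *)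
Definition in_prefix G (h : 'I_n * 'I_d) (a b : 'I_n) : bool :=
  [exists h', [&& edge_rep G h', hle h' h &
     ((h'.1 == a) && ((G h').1 == b)) || ((h'.1 == b) && ((G h').1 == a))]].

Definition in_prefix_triangle G (h : 'I_n * 'I_d) : bool :=
  let i := h.1 in let j := (G h).1 in
  [exists w : 'I_n, [&& w != i, w != j, in_prefix G h i w & in_prefix G h j w]].

Definition phi G : seq bool := [seq in_prefix_triangle G h | h <- edges G].

Definition weight (x : seq bool) : nat := count id x.

Definition act_config G (s : {perm 'I_n}) : config n d :=
  [ffun h : 'I_n * 'I_d => let h' := G ((s^-1)%g h.1, h.2) in (s h'.1, h'.2)].

Definition orbit_config G : {set config n d} :=
  [set act_config G s | s : {perm 'I_n}].

End Defs.

Local Open Scope ring_scope.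

Definition Tmax {R : realFieldType} (n d : nat) : R :=
  ('C(d, 2))%:R * n%:R / 3%:R.

Definition Tc {R : realFieldType} (c : R) (n d : nat) : R :=
  c * ((d * n)%:R / 2%:R) * ((d%:R - 1) / (d%:R + 1)).

Definition in_Gstar {R : realFieldType} (c : R) (n d : nat) (G : config n d) : bool :=
  valid_config G && (c * Tmax n d <= (num_triangles G)%:R).

(* Main.v *)
Require Import Defs.
From HB Require Import structures.
From mathcomp Require Import all_boot all_order all_algebra fingroup perm.
From mathcomp Require Import zify.
Import Order.TTheory GRing.Theory Num.Theory.
Set Implicit Arguments. Unset Strict Implicit. Unset Printing Implicit Defensive.

Lemma card_sum (T : finType) (P : pred T) : #|[set x | P x]| = \sum_x (P x : nat).
Proof. rewrite -sum1_card big_mkcond; apply: eq_bigr => x _; rewrite inE; by case: (P x). Qed.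

Section Argmin.
Variable n : nat.
Variable X : {set 'I_n}.

Definition am (s : {perm 'I_n}) x := [forall y in X, (y != x) ==> (s x < s y)].

Lemma am_uniq s x x' : x \in X -> x' \in X -> am s x -> am s x' -> x = x'.
Proof.
move=> xX x'X /forallP /(_ x') h1 /forallP /(_ x) h2.
apply/eqP; apply/negPn/negP => ne.
move: h1 h2; rewrite xX x'X eq_sym ne /= => h1 h2.
by move: (ltn_trans h1 h2); rewrite ltnn.
Qed.

Lemma am_ex s : X != set0 -> [exists x in X, am s x].
Proof.
case/set0Pn => x0 x0X.
case: (arg_minnP (fun y => s y) x0X) => m mX mmin.
apply/existsP; exists m; apply/andP; split => //; apply/forallP => y; apply/implyP => yX.
apply/implyP => ym; rewrite ltn_neqAle mmin // andbT.
by apply/eqP => /val_inj /perm_inj E; rewrite E eqxx in ym.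
Qed.

Definition cnt x := #|[set s : {perm 'I_n} | am s x]|.

Lemma cnt_le x x' : x \in X -> x' \in X -> cnt x <= cnt x'.
Proof.
move=> xX x'X; case: (eqVneq x x') => [-> //|nxx'].
rewrite /cnt -(card_imset _ (mulgI (tperm x x'))).
apply: subset_leq_card; apply/subsetP => _ /imsetP [s Hs ->].
rewrite inE in Hs; rewrite inE; apply/forallP => y; apply/implyP => yX.
apply/implyP => yx'; rewrite !permM tpermR.
case: tpermP => [yx|yx2|ny1 ny2].
- by move: (forallP Hs x'); rewrite x'X eq_sym nxx'.
- by rewrite yx2 eqxx in yx'.
- move: (forallP Hs y); rewrite yX /=; case: eqP => [E|_ //]; by case: (ny1 E).
Qed.

Lemma cnt_eq x x' : x \in X -> x' \in X -> cnt x = cnt x'.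
Proof. by move=> h1 h2; apply/eqP; rewrite eqn_leq !cnt_le. Qed.

Lemma cnt_sum (W : {set 'I_n}) : W \subset X ->
  #|[set s : {perm 'I_n} | [exists w in W, am s w]]| = \sum_(x in W) cnt x.
Proof.
move=> WX.
rewrite card_sum.
rewrite (eq_bigr (fun x => \sum_s (am s x : nat))); last by move=> x _; rewrite /cnt card_sum.
rewrite exchange_big /=; apply: eq_bigr => s _.
case: (boolP [exists w in W, am s w]) => [/existsP [x0 /andP [x0W amx0]]|nex].
  rewrite (bigD1 x0) //= amx0 big1 // => x /andP [xW xne].
  case: (boolP (am s x)) => // amx.
  by rewrite (am_uniq (subsetP WX _ xW) (subsetP WX _ x0W) amx amx0) eqxx in xne.
rewrite big1 // => x xW; case: (boolP (am s x)) => // amx.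
by case/negP: nex; apply/existsP; exists x; rewrite xW.
Qed.

Lemma argmin_card (W : {set 'I_n}) : W \subset X ->
  #|[set s : {perm 'I_n} | [exists w in W, am s w]]| * #|X|
  = #|W| * #|{perm 'I_n}|.
Proof.
move=> WX.
case: (eqVneq X set0) => [X0|Xn0].
  have -> : W = set0 by apply/eqP; rewrite -subset0 -X0.
  by rewrite X0 !cards0 !muln0 mul0n.
case/set0Pn: (Xn0) => x0 x0X.
have allX : #|{perm 'I_n}| = #|[set s : {perm 'I_n} | [exists w in X, am s w]]|.
  apply: eq_card => s; rewrite inE am_ex //.
rewrite allX !cnt_sum //.
rewrite (eq_bigr (fun _ => cnt x0)); last by move=> x xW; apply: cnt_eq => //; apply: (subsetP WX).
rewrite (eq_bigr (fun _ => cnt x0)); last by move=> x xX; apply: cnt_eq.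
rewrite [in RHS](eq_bigr (fun _ => cnt x0)); last by move=> x xX; apply: cnt_eq.
by rewrite !sum_nat_const -mulnA [cnt x0 * _]mulnC.
Qed.

End Argmin.

Lemma weight_count n d (H : config n d) :
  weight (phi H) = #|[set h | edge_rep H h && in_prefix_triangle H h]|.
Proof.
rewrite /weight /phi count_map /edges.
rewrite (seq.permP (permEl (perm_sort _ _))) -sum1_count big_filter_cond big_enum_cond.
rewrite -sum1_card [RHS]big_mkcond [LHS]big_mkcond /=.
by apply: eq_bigr => i _; rewrite !inE.
Qed.

Section D.
Variable n : nat.
Variable t : {set 'I_n}.
Hypothesis t3 : #|t| = 3.

Lemma inner3 a b :
  \sum_w ([&& a \in t, b \in t, w \in t, a != b, a != w & b != w] : nat)
  = [&& a \in t, b \in t & a != b].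
Proof.
case h: [&& a \in t, b \in t & a != b]; last first.
  apply: big1 => w _; move: h.
  by case: (a \in t); case: (b \in t); case: (a != b); rewrite //= ?andbF.
case/and3P: h => at_ bt ab.
rewrite -card_sum.
have -> : [set w | [&& a \in t, b \in t, w \in t, a != b, a != w & b != w]] = (t :\ a) :\ b.
  apply/setP => w; rewrite !inE at_ bt ab /= [b == w]eq_sym [a == w]eq_sym.
  by case: (w \in t); case: (w == a); case: (w == b).
have := cardsD1 a t; have := cardsD1 b (t :\ a); rewrite at_ !inE bt eq_sym ab t3 /=.
lia.
Qed.

Lemma mid3 a :
  \sum_b \sum_w ([&& a \in t, b \in t, w \in t, a != b, a != w & b != w] : nat)
  = (a \in t) * 2.
Proof.
under eq_bigr do rewrite inner3.
case at_: (a \in t); last by apply: big1.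
rewrite -card_sum.
have -> : [set b | true && ((b \in t) && (a != b))] = t :\ a.
  by apply/setP => b; rewrite !inE /= eq_sym andbC.
by have := cardsD1 a t; rewrite at_ t3 /=; lia.
Qed.

Lemma cardD3 :
  #|[set x : 'I_n * 'I_n * 'I_n | [&& x.1.1 \in t, x.1.2 \in t, x.2 \in t,
        x.1.1 != x.1.2, x.1.1 != x.2 & x.1.2 != x.2]]| = 6.
Proof.
rewrite card_sum.
have -> : \sum_(x : 'I_n * 'I_n * 'I_n)
    ([&& x.1.1 \in t, x.1.2 \in t, x.2 \in t, x.1.1 != x.1.2, x.1.1 != x.2 & x.1.2 != x.2] : nat)
  = \sum_a \sum_b \sum_w ([&& a \in t, b \in t, w \in t, a != b, a != w & b != w] : nat).
  rewrite pair_bigA pair_bigA; apply: eq_bigr => -[[a b] w] _ //.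
under eq_bigr do rewrite mid3.
rewrite -big_distrl /= -card_sum.
have -> : [set a | a \in t] = t by apply/setP => a; rewrite inE.
by rewrite t3.
Qed.
End D.

Lemma S3 n (t : {set 'I_n}) a b c : #|t| = 3 -> a \in t -> b \in t -> c \in t ->
  a != b -> a != c -> b != c -> [set a; b; c] = t.
Proof.
move=> t3 at_ bt ct ab ac bc; apply/eqP; rewrite eqEcard; apply/andP; split.
  by apply/subsetP => x; rewrite !inE; case/orP => [/orP [] |] /eqP ->.
rewrite t3 -setUA cardsU1 cards2 bc !inE negb_or ab ac.
by [].
Qed.

Section Main.
Variables n d : nat.
Variable G : config n d.
Hypothesis hv : valid_config G.

Lemma GG h : G (G h) = h.
Proof. by case/andP: hv => /forallP /(_ h) /andP [/eqP -> _]. Qed.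

Lemma adj_sym x y : adj G x y -> adj G y x.
Proof.
case/existsP=> k /eqP e; apply/existsP; exists (G (x, k)).2.
by rewrite -e -surjective_pairing GG.
Qed.

Lemma actE (s : {perm 'I_n}) h :
  act_config G s h = (s (G ((s^-1)%g h.1, h.2)).1, (G ((s^-1)%g h.1, h.2)).2).
Proof. by rewrite ffunE. Qed.

Definition Qs (s : {perm 'I_n}) (g : 'I_n * 'I_d) : bool :=
  (s g.1 < s (G g).1) && [exists w, [&& s w < s g.1, adj G w g.1 & adj G w (G g).1]].

Lemma Hadj s h y : (act_config G s h).1 == y -> adj G ((s^-1)%g h.1) ((s^-1)%g y).
Proof. by rewrite actE /= => /eqP <-; apply/existsP; exists h.2; rewrite permK. Qed.

Lemma hle1 (h h' : 'I_n * 'I_d) : hle h' h -> h'.1 <= h.1.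
Proof.
by case/orP => [/eqP -> //| /orP [/ltnW // | /andP [/eqP -> _]]].
Qed.

Lemma core s h :
  (edge_rep (act_config G s) h && in_prefix_triangle (act_config G s) h)
  = Qs s ((s^-1)%g h.1, h.2).
Proof.
case: h => a k.
set H := act_config G s; set g := ((s^-1)%g (a, k).1, (a, k).2).
have Hh : (H (a, k)).1 = s (G g).1 by rewrite actE.
rewrite /Qs /= permKV /edge_rep /in_prefix_triangle /in_prefix /= Hh.
case altb: (a < s (G g).1) => //=.
apply/existsP/existsP.
- case=> w /and4P [wa wj /existsP [h1 /and3P [r1 l1 c1]] /existsP [h2 /and3P [r2 l2 c2]]].
  exists ((s^-1)%g w); rewrite permKV.
  move/hle1: l2 => /= l2.
  case/orP: c2 => /andP [/eqP e2 f2].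
    by move: l2; rewrite e2 leqNgt altb.
  have wla : w < a by rewrite ltn_neqAle wa -e2 l2.
  have A2 := Hadj f2; rewrite e2 permK in A2.
  rewrite wla A2 andbT /=.
  case/orP: c1 => /andP [/eqP e1 f1]; have A1 := Hadj f1; rewrite e1 in A1 => //.
  exact: adj_sym.
- case=> x /and3P [xa /existsP [k1 /eqP e1] /existsP [k2 /eqP e2]].
  exists (s x).
  have H1 : (H (s x, k1)).1 = a by rewrite actE /= permK e1 permKV.
  have H2 : (H (s x, k2)).1 = s (G g).1 by rewrite actE /= permK e2.
  have ne1 : s x != a by apply/eqP => E; move: xa; rewrite E ltnn.
  have ne2 : s x != s (G g).1.
    by apply/eqP => E; move: (ltn_trans xa altb); rewrite E ltnn.
  rewrite ne1 ne2 /=.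
  apply/andP; split; apply/existsP.
    exists (s x, k1); rewrite /edge_rep /= H1 xa /hle /hlt /= xa orbT /=.
    by rewrite !eqxx orbT.
  exists (s x, k2); rewrite /edge_rep /= H2 (ltn_trans xa altb) /hle /hlt /= xa orbT /=.
  by rewrite !eqxx orbT.
Qed.

Lemma Gne h : (G h).1 != h.1.
Proof. by case/andP: hv => /forallP /(_ h) /andP [_ ->]. Qed.
Lemma adj_irr x : ~~ adj G x x.
Proof.
apply/existsP => -[k /eqP e]; by move: (Gne (x, k)); rewrite e eqxx.
Qed.
Definition Wg g := [set w | adj G w g.1 && adj G w (G g).1].
Definition Xg g := g.1 |: ((G g).1 |: Wg g).
Definition Eset g := [set s : {perm 'I_n} |
   [exists w in Wg g, (s w < s g.1) && (s w < s (G g).1)]].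

Lemma perm_neq (s : {perm 'I_n}) u v : u != v -> (s u == s v :> nat) = false.
Proof. by move=> uv; apply/negbTE; apply: contra uv => /eqP /val_inj /perm_inj ->. Qed.

Lemma pair g :
  #|[set s | Qs s g]| + #|[set s | Qs s (G g)]| = #|Eset g|.
Proof.
have e : Eset g = [set s | Qs s g] :|: [set s | Qs s (G g)].
  apply/setP => s; rewrite !inE /Qs GG.
  apply/idP/idP.
    case/existsP => w /andP []; rewrite inE => /andP [a1 a2] /andP [l1 l2].
    have := perm_neq s (Gne g); case: ltngtP => // h _.
      apply/orP; left; apply/existsP; exists w; by rewrite l1 a1 a2.
    apply/orP; right; apply/existsP; exists w; by rewrite l2 a1 a2.
  case/orP => /andP [h /existsP [w /and3P [l a1 a2]]]; apply/existsP; exists w;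
    rewrite inE ?a1 ?a2 /= ?l /=.
    exact: ltn_trans l h.
  by rewrite (ltn_trans l h).
rewrite e cardsU.
suff -> : [set s | Qs s g] :&: [set s | Qs s (G g)] = set0 by rewrite cards0 subn0.
apply/setP => s; rewrite !inE /Qs GG.
case: (ltngtP (s g.1) (s (G g).1)) => //=.
by rewrite andbF.
Qed.

Lemma Eset_am g : Eset g = [set s | [exists w in Wg g, am (Xg g) s w]].
Proof.
apply/setP => s; rewrite !inE; apply/idP/idP.
  case/existsP => w0 /andP [w0W /andP [l1 l2]].
  case: (arg_minnP (fun y => s y) w0W) => m mW mmin.
  apply/existsP; exists m; apply/andP; split => //; apply/forallP => y; apply/implyP.
  rewrite /Xg !in_setU1 => /or3P [/eqP ->|/eqP ->|yW]; apply/implyP => ym.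
  - exact: leq_ltn_trans (mmin _ w0W) l1.
  - exact: leq_ltn_trans (mmin _ w0W) l2.
  rewrite ltn_neqAle (mmin y yW) andbT.
  by rewrite perm_neq // eq_sym.
case/existsP => w /andP [wW /forallP H].
apply/existsP; exists w; rewrite wW /=.
have w1 : g.1 != w.
  by apply/eqP => E; move: wW; rewrite inE -E (negbTE (adj_irr _)).
have w2 : (G g).1 != w.
  by apply/eqP => E; move: wW; rewrite inE -E (negbTE (adj_irr _)) andbF.
move: (H g.1) (H (G g).1); rewrite !inE !eqxx /= orbT w1 w2 /= => -> ->.
by [].
Qed.

Lemma card_Xg g : #|Xg g| = (#|Wg g|).+2.
Proof.
have n1 : g.1 \notin Wg g by rewrite inE (negbTE (adj_irr _)).
have n2 : (G g).1 \notin Wg g by rewrite inE (negbTE (adj_irr _)) andbF.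
rewrite /Xg cardsU1 cardsU1 !inE eq_sym (negbTE (Gne g)) /=.
by rewrite !(negbTE (adj_irr _)) andbF.
Qed.

Lemma Eg g : #|Eset g| * (#|Wg g|).+2 = #|Wg g| * #|{perm 'I_n}|.
Proof.
rewrite Eset_am -card_Xg argmin_card //.
by apply/subsetP => w wW; rewrite /Xg !in_setU1 wW !orbT.
Qed.

Lemma Wg_le g : (#|Wg g|).+1 <= d.
Proof.
pose N := [set (G (g.1, k)).1 | k : 'I_d].
have sub : Wg g \proper N.
  rewrite properEneq; apply/andP; split.
    apply/negP => /eqP E.
    have : (G g).1 \in N by apply/imsetP; exists g.2 => //; rewrite -surjective_pairing.
    by rewrite -E inE (negbTE (adj_irr _)) andbF.
  apply/subsetP => w; rewrite inE => /andP [a1 _].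
  case/existsP: (adj_sym a1) => k /eqP <-; apply/imsetP; by exists k.
have := proper_card sub; move: (leq_imset_card (fun k : 'I_d => (G (g.1, k)).1) 'I_d).
rewrite card_ord; move=> h1 h2; exact: leq_trans h2 h1.
Qed.

Lemma G_inj : injective G.
Proof. exact: (can_inj GG). Qed.

Definition pairs := [set p : ('I_n * 'I_d) * 'I_n | adj G p.2 p.1.1 && adj G p.2 (G p.1).1].
Definition P3 := [set x : 'I_n * 'I_n * 'I_n |
  [&& adj G x.1.1 x.1.2, adj G x.2 x.1.1 & adj G x.2 x.1.2]].

Lemma sumW_pairs : \sum_g #|Wg g| = #|pairs|.
Proof.
rewrite card_sum -(pair_bigA _ (fun (g : 'I_n * 'I_d) (w : 'I_n) => (adj G w g.1 && adj G w (G g).1 : nat))) /=.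
apply: eq_bigr => g _.
by rewrite card_sum.
Qed.

Lemma P3_le : #|P3| <= #|pairs|.
Proof.
pose F (p : ('I_n * 'I_d) * 'I_n) := ((p.1.1, (G p.1).1), p.2).
apply: leq_trans (leq_imset_card F pairs).
apply: subset_leq_card; apply/subsetP => -[[a b] w]; rewrite inE /= => /and3P [ab wa wb].
case/existsP: ab => k /eqP e.
apply/imsetP; exists ((a, k), w); first by rewrite inE /= e wa wb.
by rewrite /F /= e.
Qed.

Lemma tri_le : 6 * num_triangles G <= #|P3|.
Proof.
pose S (x : 'I_n * 'I_n * 'I_n) := [set x.1.1; x.1.2; x.2].
rewrite -sum1_card (partition_big S xpredT) //=.
rewrite (bigID (fun t => is_triangle G t)) /=.
apply: leq_trans (leq_addr _ _).
rewrite /num_triangles -sum1dep_card big_distrr /= muln1.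
apply: leq_sum => t tri.
rewrite sum1dep_card.
case/andP: (tri) => /eqP t3 /forallP H.
have A : forall a b, a \in t -> b \in t -> a != b -> adj G a b.
  move=> a b at_ bt ab; move: (H a); rewrite at_ /= => /forallP /(_ b).
  by rewrite bt ab.
rewrite -(cardD3 t3); apply: subset_leq_card; apply/subsetP => -[[a b] w].
rewrite !inE /= => /and5P [at_ bt wt ab /andP [aw bw]].
rewrite A // A // 1?eq_sym // A // 1?eq_sym //=.
by rewrite /S /= (S3 t3).
Qed.

Lemma weight_act s : weight (phi (act_config G s)) = #|[set g | Qs s g]|.
Proof.
pose f (h : 'I_n * 'I_d) := ((s^-1)%g h.1, h.2).
have finj : injective f by move=> [a k] [b l] /= [/perm_inj -> ->].
rewrite weight_count -[in RHS](card_preimset _ finj).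
by apply: eq_card => h; rewrite !inE core.
Qed.

Lemma sumW : \sum_s weight (phi (act_config G s)) = \sum_g #|[set s | Qs s g]|.
Proof.
rewrite (eq_bigr (fun s => \sum_g (Qs s g : nat))); last first.
  by move=> s _; rewrite weight_act card_sum.
by rewrite exchange_big; apply: eq_bigr => g _; rewrite card_sum.
Qed.

Lemma twoS : 2 * \sum_g #|[set s | Qs s g]| = \sum_g #|Eset g|.
Proof.
rewrite mul2n -addnn [X in _ + X](reindex_inj G_inj) /= -big_split.
by apply: eq_bigr => g _; exact: pair.
Qed.

Lemma key : 3 * (num_triangles G * #|{perm 'I_n}|)
   <= d.+1 * \sum_s weight (phi (act_config G s)).
Proof.
have h1 : 6 * num_triangles G <= \sum_g #|Wg g|.
  by rewrite sumW_pairs; exact: leq_trans (tri_le) (P3_le).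
have h2 : (\sum_g #|Wg g|) * #|{perm 'I_n}| <= d.+1 * \sum_g #|Eset g|.
  rewrite big_distrl big_distrr /=; apply: leq_sum => g _.
  rewrite -Eg mulnC; apply: leq_mul (leqnn _); exact: Wg_le.
have h3 := leq_mul h1 (leqnn #|{perm 'I_n}|).
rewrite sumW; move: h2; rewrite -twoS.
move: h3; set T := num_triangles G; set N := #|{perm 'I_n}|.
set A := \sum_g #|Wg g|; set B := \sum_g #|[set s | Qs s g]|.
nia.
Qed.

Lemma wbound s : 2 * weight (phi (act_config G s)) <= n * d.
Proof.
rewrite weight_act.
pose R := [set g | s g.1 < s (G g).1].
have QR : [set g | Qs s g] \subset R.
  by apply/subsetP => g; rewrite !inE => /andP [].
apply: leq_trans (leq_mul (leqnn 2) (subset_leq_card QR)) _.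
have dis : R :&: (G @: R) = set0.
  apply/setP => g; rewrite inE in_set0; apply/negbTE/negP => /andP [h1 /imsetP [g' g'R e]].
  rewrite inE e GG in h1; rewrite inE in g'R.
  by move: (ltn_trans h1 g'R); rewrite ltnn.
have := cardsU R (G @: R); rewrite dis cards0 subn0 (card_imset _ G_inj) => e.
rewrite mul2n -addnn -e.
apply: leq_trans (max_card _) _.
by rewrite card_prod !card_ord.
Qed.

End Main.

Lemma act_comp n d (G : config n d) (s t : {perm 'I_n}) :
  act_config (act_config G s) t = act_config G (s * t)%g.
Proof.
apply/ffunP => -[x k]; by rewrite !ffunE /= invMg !permM.
Qed.

Lemma act1 n d (G : config n d) : act_config G 1%g = G.
Proof.
apply/ffunP => -[x k]; rewrite !ffunE /= invg1 !perm1 /=.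
by rewrite -surjective_pairing.
Qed.


Lemma fib n d (G : config n d) (t : {perm 'I_n}) :
  #|[set s | act_config G s == act_config G t]| = #|[set s | act_config G s == G]|.
Proof.
apply/eqP; rewrite eqn_leq; apply/andP; split.
  rewrite -(card_imset _ (mulIg (t^-1)%g)); apply: subset_leq_card.
  apply/subsetP => _ /imsetP [s Hs ->]; rewrite !inE in Hs *.
  by rewrite -act_comp (eqP Hs) act_comp mulgV act1.
rewrite -(card_imset _ (mulIg t)); apply: subset_leq_card.
apply/subsetP => _ /imsetP [s Hs ->]; rewrite !inE in Hs *.
by rewrite -act_comp (eqP Hs).
Qed.

Lemma fiber n d (G : config n d) (P : pred (config n d)) :
  #|[set s | P (act_config G s)]| =
  #|[set H in orbit_config G | P H]| * #|[set s | act_config G s == G]|.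
Proof.
rewrite -sum1dep_card (partition_big (fun s => act_config G s)
   (fun H => (H \in orbit_config G) && P H)) /=; last first.
  by move=> s Ps; rewrite Ps andbT; apply/imsetP; exists s.
rewrite (eq_bigr (fun _ => #|[set s | act_config G s == G]|)); last first.
  move=> H /andP [/imsetP [t _ ->] PH].
  rewrite sum1dep_card -(fib G t); apply: eq_card => s; rewrite !inE.
  by case: eqP => [->|]; rewrite ?PH ?andbF.
by rewrite -sum_nat_const; apply: eq_bigl => H; rewrite inE.
Qed.

Lemma bin2_2 d : 'C(d, 2) * 2 = d * d.-1.
Proof.
rewrite bin2 muln2 halfK oddM.
case: d => [|k] //=; by case: (odd k); rewrite ?subn0.
Qed.

From mathcomp Require Import ring lra.
Local Open Scope ring_scope.

Lemma bin2R (R : realFieldType) d : ('C(d, 2))%:R * 2 = (d%:R : R) * (d%:R - 1).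
Proof.
have := bin2_2 d; move/(congr1 (fun m => (m%:R : R))); rewrite natrM => ->.
case: d => [|k]; first by rewrite mul0r.
by rewrite natrM /= -addn1 natrD addrK.
Qed.

Theorem lemma2 (R : realFieldType) (c : R) (n d : nat)
  (hc0 : 0 < c) (hc1 : c < 1) (hdn : ~~ odd (d * n)%N)
  (G : config n d) (hG : in_Gstar c G) :
  (2%:R / (d * n)%N%:R * (#|orbit_config G|)%:R : R) <=
  (#|[set H in orbit_config G | Tc c n d - 1 <= (weight (phi H))%:R]|)%:R.
Proof.
case/andP: hG => hv hT.
set T := num_triangles G in hT.
set N := #|{perm 'I_n}|.
set Stab := #|[set s | act_config G s == G]|.
pose good := fun H : config n d => Tc c n d - 1 <= (weight (phi H))%:R.
have hfib := fiber G good.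
have hall : N = (#|orbit_config G| * Stab)%N.
  have := fiber G xpredT.
  have -> : #|[set s | xpredT (act_config G s)]| = N by apply: eq_card => s; rewrite inE.
  have -> : #|[set H in orbit_config G | xpredT H]| = #|orbit_config G|.
    by apply: eq_card => H; rewrite inE andbT.
  done.
have Stab0 : (0 < Stab)%N.
  by rewrite card_gt0; apply/set0Pn; exists 1%g; rewrite inE act1.
case: (posnP (d * n)) => [dn0|dnpos].
  by rewrite dn0 mulr0n invr0 mulr0 mul0r ler0n.
have key2 : (2 * N <= d * n * #|[set s | good (act_config G s)]|)%N.
  case: (lerP (Tc c n d - 1) 0) => [Tle|Tgt].
    have -> : #|[set s | good (act_config G s)]| = N.
      by apply: eq_card => s; rewrite !inE /good (le_trans Tle (ler0n _ _)).
    have h2 : (2 <= d * n)%N.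
      by move: hdn dnpos; case: (d * n)%N => [|[|m]].
    exact: leq_mul h2 (leqnn N).
  rewrite -(ler_nat R).
  set gs := #|[set s | good (act_config G s)]|.
  set Sw := (\sum_s weight (phi (act_config G s)))%N.
  have K := key hv.
  rewrite -/T -/N -/Sw in K.
  have eTc : Tc c n d * (d%:R + 1) = c * n%:R * 'C(d, 2)%:R.
    rewrite /Tc natrM.
    have d1 : (d%:R + 1 : R) != 0 by rewrite -[1 : R]/(1%:R) -natrD pnatr_eq0 addn1.
    have -> : ('C(d, 2))%:R = (d%:R : R) * (d%:R - 1) / 2.
      by rewrite -bin2R mulfK // pnatr_eq0.
    by field.
  have h3T : c * n%:R * 'C(d, 2)%:R <= 3 * T%:R.
    move: hT; rewrite /Tmax.
    have -> : c * ('C(d, 2)%:R * n%:R / 3%:R) = (c * n%:R * 'C(d, 2)%:R) / 3.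
      by field.
    rewrite ler_pdivrMr ?ltr0n // => h; lra.
  have KR : (N%:R * Tc c n d) * (d%:R + 1) <= Sw%:R * (d%:R + 1).
    rewrite -mulrA eTc.
    have : ((3 * (T * N))%:R : R) <= (d.+1 * Sw)%:R by rewrite ler_nat.
    rewrite !natrM -addn1 natrD.
    have hN : (0 : R) <= N%:R by apply: ler0n.
    nra.
  have NT : N%:R * Tc c n d <= Sw%:R.
    have dpos : (0:R) < d%:R + 1 by rewrite -[1:R]/(1%:R) -natrD ltr0n addn1.
    by rewrite -(ler_pM2r dpos).
  have pw : forall s : {perm 'I_n},
      (weight (phi (act_config G s)))%:R - (Tc c n d - 1)
      <= ((good (act_config G s) : nat)%:R) * ((d * n)%N%:R / 2).
    move=> s; have wb := wbound hv s.
    have wbR : (2 * (weight (phi (act_config G s)))%:R <= (d * n)%N%:R :> R).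
      by move: wb; rewrite [(n * d)%N]mulnC -(ler_nat R) [X in X <= _]natrM.
    rewrite /good; case: (boolP (Tc c n d - 1 <= (weight (phi (act_config G s)))%:R)) => h /=.
      rewrite mul1r; lra.
    rewrite -ltNge in h; rewrite mul0r; lra.
  have S := @ler_sum R _ (index_enum {perm 'I_n}) xpredT _ _ (fun s _ => pw s).
  rewrite sumrB -natr_sum -/Sw in S.
  have e1 : \sum_(i : {perm 'I_n}) (Tc c n d - 1) = N%:R * (Tc c n d - 1).
    by rewrite sumr_const mulr_natl.
  have e2 : \sum_(i : {perm 'I_n}) (((good (act_config G i) : nat)%:R : R) * ((d * n)%N%:R / 2))
      = gs%:R * ((d * n)%N%:R / 2).
    by rewrite /gs card_sum natr_sum mulr_suml.
  rewrite e1 e2 in S.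
  rewrite !natrM in S *.
  lra.
move: key2; rewrite hfib hall mulnA mulnA leq_pmul2r // => key2.
rewrite mulrAC ler_pdivrMr ?ltr0n // -!natrM ler_nat mulnC.
by rewrite mulnC [X in (_ <= X)%N]mulnC.
Qed.
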